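(* Let $q(y,\eta)=(\eta-Ay)^2+\frac12 Vy\cdot y$, $(y,\eta)\in\mathbb{R}^{2n}$, where $A$ is a real $n\times n$ matrix and $V$ is a complex symmetric $n\times n$ matrix with $\mathrm{Re}\,V\geq 0$. Then the restriction of $q$ to its singular space $S$ is elliptic if and only if the matrix $V$ is invertible.
   Context: For a complex-valued quadratic form $q$ on $\mathbb{R}^{2n}_{y,\eta}$ with $\mathrm{Re}\,q\geq 0$, the singular space is $S=\{Y\in\mathbb{R}^{2n};\ H^k_{\mathrm{Im}\,q}\mathrm{Re}\,q(Y)=0\ \text{for all } k\in\mathbb{N}\}$, where for real $f\in C^1(\mathbb{R}^{2n})$, $H_f=f'_{\eta}\cdot\partial_y-f'_y\cdot\partial_{\eta}$ is its Hamilton vector field. The restriction of $q$ to $S$ is called elliptic if $Y\in S$, $q(Y)=0$ imply $Y=0$. *)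

(* Defs.v *)
From HB Require Import structures.
From mathcomp Require Import all_boot all_order all_algebra.
From mathcomp Require Import all_classical all_reals all_analysis.
From mathcomp Require Import complex.
Set Implicit Arguments. Unset Strict Implicit. Unset Printing Implicit Defensive.
Import Order.TTheory GRing.Theory Num.Theory.
Import numFieldNormedType.Exports.
Local Open Scope ring_scope.

Section Defs.
Variables (R : realType) (n : nat).

Definition ycoord (Y : 'rV[R]_(n + n)) : 'rV[R]_n := lsubmx Y.
Definition etacoord (Y : 'rV[R]_(n + n)) : 'rV[R]_n := rsubmx Y.

Definition e_y (j : 'I_n) : 'rV[R]_(n + n) := delta_mx 0 (lshift n j).
Definition e_eta (j : 'I_n) : 'rV[R]_(n + n) := delta_mx 0 (rshift n j).

Definition hamilton (f g : 'rV[R]_(n + n) -> R) : 'rV[R]_(n + n) -> R :=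
  fun Y => \sum_(j < n)
    ('D_(e_eta j) f Y * 'D_(e_y j) g Y - 'D_(e_y j) f Y * 'D_(e_eta j) g Y).

Definition singular_space (q : 'rV[R]_(n + n) -> R[i]) : set 'rV[R]_(n + n) :=
  [set Y | forall k : nat,
     iter k (hamilton (fun Z => complex.Im (q Z))) (fun Z => complex.Re (q Z)) Y = 0].

Definition elliptic_on_singular_space (q : 'rV[R]_(n + n) -> R[i]) : Prop :=
  forall Y, singular_space q Y -> q Y = 0 -> Y = 0.

Definition qAV (A : 'M[R]_n) (V : 'M[R[i]]_n) (Y : 'rV[R]_(n + n)) : R[i] :=
  let y := ycoord Y in
  let d := etacoord Y - y *m A^T in
  ((\sum_(i < n) d 0 i ^+ 2)%:C)%C
  + (2%:R)^-1 * \sum_(i < n) \sum_(j < n) V i j * (y 0 i)%:C%C * (y 0 j)%:C%C.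

Definition re_psd (V : 'M[R[i]]_n) : Prop :=
  forall y : 'rV[R]_n, 0 <= \sum_(i < n) \sum_(j < n) complex.Re (V i j) * y 0 i * y 0 j.

End Defs.

(* Main.v *)
Require Import Defs.
From HB Require Import structures.
From mathcomp Require Import all_boot all_order all_algebra.
From mathcomp Require Import all_classical all_reals all_analysis.
From mathcomp Require Import complex.
From mathcomp Require Import ring lra.
Import Order.TTheory GRing.Theory Num.Theory.
Import numFieldNormedType.Exports.
Set Implicit Arguments. Unset Strict Implicit. Unset Printing Implicit Defensive.
Local Open Scope classical_set_scope.
Local Open Scope ring_scope.

Lemma D_quad (R : realType) (m : nat) (f : 'rV[R]_m -> R) (x v : 'rV[R]_m) (c b : R) :
  (forall h : R, f (x + h *: v) = f x + h * c + h ^+ 2 * b) -> 'D_v f x = c.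
Proof.
move=> H.
apply: cvg_lim => //.
have E : \forall h \near dnbhs (0:R), (fun h : R => c + h * b) h = (fun h : R => h^-1 *: ((f \o shift x) (h *: v) - f x)) h.
  near=> h. rewrite /=. idtac.
  have h0 : h != 0 by near: h; exact: nbhs_dnbhs_neq.
  apply/esym. rewrite /= (addrC _ x) H.
  have -> : f x + h * c + h ^+ 2 * b - f x = h * (c + h * b) by ring.
  rewrite -[_ *: _]/(_ * _). by rewrite mulKf.
apply: cvg_trans (near_eq_cvg E) _.
apply: cvg_within_filter.
rewrite -[c in X in cvg_to _ X]addr0.
apply: cvgD; first exact: cvg_cst.
have : (fun h : R => h * b) @ (nbhs (0:R)) --> (0:R) * b by apply: cvgMl; exact: cvg_id.
by rewrite mul0r.
Unshelve. all: by end_near.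
Qed.

Definition QF (R : realType) n (M : 'I_n -> 'I_n -> R) (y : 'rV[R]_n) : R :=
  \sum_i \sum_j M i j * y 0 i * y 0 j.
Definition Mv (R : realType) n (M : 'I_n -> 'I_n -> R) (y : 'rV[R]_n) (i : 'I_n) : R :=
  \sum_j M i j * y 0 j.
Definition BL (R : realType) n (M : 'I_n -> 'I_n -> R) (y v : 'rV[R]_n) : R :=
  \sum_i \sum_j M i j * (y 0 i * v 0 j + v 0 i * y 0 j).
Definition symf (R : realType) n (M : 'I_n -> 'I_n -> R) := forall i j, M i j = M j i.

Lemma QF_exp (R : realType) n (M : 'I_n -> 'I_n -> R) (y v : 'rV[R]_n) (t : R) :
  QF M (y + t *: v) = QF M y + t * BL M y v + t ^+ 2 * QF M v.
Proof.
rewrite /QF /BL !mulr_sumr -!big_split /=; apply: eq_bigr => a _.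
rewrite !mulr_sumr -!big_split /=; apply: eq_bigr => b _; rewrite !mxE; ring.
Qed.

Lemma QF_Mv (R : realType) n (M : 'I_n -> 'I_n -> R) (y : 'rV[R]_n) :
  QF M y = \sum_i y 0 i * Mv M y i.
Proof.
apply: eq_bigr => i _; rewrite /Mv mulr_sumr; apply: eq_bigr => j _; ring.
Qed.

Lemma bil_sym (R : realType) n (M : 'I_n -> 'I_n -> R) (a b : 'rV[R]_n) :
  symf M -> \sum_i a 0 i * Mv M b i = \sum_i b 0 i * Mv M a i.
Proof.
move=> sM; rewrite /Mv.
under eq_bigr do rewrite mulr_sumr.
rewrite exchange_big; apply: eq_bigr => i _; rewrite mulr_sumr; apply: eq_bigr => j _.
rewrite (sM j i); ring.
Qed.

Lemma BL_sym (R : realType) n (M : 'I_n -> 'I_n -> R) (y v : 'rV[R]_n) :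
  symf M -> BL M y v = 2 * \sum_i v 0 i * Mv M y i.
Proof.
move=> sM.
have E1 : \sum_i \sum_j M i j * (y 0 i * v 0 j) = \sum_i v 0 i * Mv M y i.
  rewrite exchange_big; apply: eq_bigr => i _; rewrite /Mv mulr_sumr.
  apply: eq_bigr => j _; rewrite (sM j i); ring.
have E2 : \sum_i \sum_j M i j * (v 0 i * y 0 j) = \sum_i v 0 i * Mv M y i.
  apply: eq_bigr => i _; rewrite /Mv mulr_sumr; apply: eq_bigr => j _; ring.
rewrite /BL.
have -> : \sum_i \sum_j M i j * (y 0 i * v 0 j + v 0 i * y 0 j) =
  \sum_i \sum_j M i j * (y 0 i * v 0 j) + \sum_i \sum_j M i j * (v 0 i * y 0 j).
  rewrite -big_split; apply: eq_bigr => i _; rewrite -big_split.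
  by apply: eq_bigr => j _; rewrite mulrDr.
rewrite E1 E2; ring.
Qed.

Lemma sum_delta (R : realType) n (j : 'I_n) (F : 'I_n -> R) :
  \sum_i (delta_mx 0 j : 'rV[R]_n) 0 i * F i = F j.
Proof.
rewrite (bigD1 j) //= mxE !eqxx /= mul1r big1 ?addr0 // => i ij.
by rewrite mxE (negbTE ij) andbF mul0r.
Qed.

Lemma sum_sq_shift (R : realType) n (d : 'I_n -> R) (j : 'I_n) (h : R) :
  \sum_i (d i + h * (delta_mx 0 j : 'rV[R]_n) 0 i) ^+ 2 =
  \sum_i d i ^+ 2 + h * (2 * d j) + h ^+ 2 * 1.
Proof.
rewrite (bigD1 j) //= [in RHS](bigD1 j) //= mxE !eqxx /=.
rewrite (eq_bigr (fun i => d i ^+ 2)) => [|i ij]; last first.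
  by rewrite mxE (negbTE ij) andbF mulr0 addr0.
ring.
Qed.

Lemma psd_kernel (R : realType) n (M : 'I_n -> 'I_n -> R) (y : 'rV[R]_n) :
  symf M -> (forall z, 0 <= QF M z) -> QF M y = 0 -> forall i, Mv M y i = 0.
Proof.
move=> sM psd Q0.
set u : 'rV[R]_n := \row_i Mv M y i.
set s := \sum_i u 0 i * Mv M y i.
set p := QF M u.
have s0 : 0 <= s by apply: sumr_ge0 => i _; rewrite mxE -expr2 sqr_ge0.
have p0 : 0 <= p := psd u.
set e := (p + 1)^-1.
have e0 : 0 < e by rewrite invr_gt0; lra.
have ep : e * (p + 1) = 1 by rewrite mulVf //; lra.
have := psd (y + (- (s * e)) *: u).
rewrite QF_exp Q0 BL_sym // -/s -/p => H.
have H2 : 0 <= - (s ^+ 2 * e * (1 + e)).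
  have -> : - (s ^+ 2 * e * (1 + e)) = 0 + - (s * e) * (2 * s) + (- (s * e)) ^+ 2 * p.
    have ep' : e * p = 1 - e by rewrite -ep; ring.
    rewrite (_ : (- (s * e)) ^+ 2 * p = s ^+ 2 * e * (e * p)); last by ring.
    rewrite ep'; ring.
  exact: H.
have : s ^+ 2 * (e * (1 + e)) <= 0 by rewrite mulrA; lra.
have ee : 0 < e * (1 + e) by apply: mulr_gt0 => //; lra.
rewrite pmulr_lle0 // => ss.
have sz : s = 0 by apply/eqP; rewrite -sqrf_eq0 eq_le ss sqr_ge0.
move=> i.
have nn : forall k, predT k -> 0 <= u 0 k * Mv M y k.
  by move=> k _; rewrite mxE -expr2 sqr_ge0.
have := psumr_eq0P nn sz isT.
by move=> /(_ i); rewrite mxE => /eqP; rewrite mulf_eq0 orbb => /eqP.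
Qed.

Lemma ycoord_eta (R : realType) n (Y : 'rV[R]_(n + n)) j h :
  ycoord (Y + h *: e_eta R j) = ycoord Y.
Proof. by apply/rowP => k; rewrite !mxE eq_lrshift andbF mulr0 addr0. Qed.

Lemma etacoord_eta (R : realType) n (Y : 'rV[R]_(n + n)) j h :
  etacoord (Y + h *: e_eta R j) = etacoord Y + h *: delta_mx 0 j.
Proof. by apply/rowP => k; rewrite !mxE eq_rshift. Qed.

Lemma ycoord_y (R : realType) n (Y : 'rV[R]_(n + n)) j h :
  ycoord (Y + h *: e_y R j) = ycoord Y + h *: delta_mx 0 j.
Proof. by apply/rowP => k; rewrite !mxE eq_lshift. Qed.

Lemma ReD (R : realType) (x y : R[i]) : complex.Re (x + y) = complex.Re x + complex.Re y.
Proof. by case: x; case: y. Qed.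
Lemma ImD (R : realType) (x y : R[i]) : complex.Im (x + y) = complex.Im x + complex.Im y.
Proof. by case: x; case: y. Qed.

Lemma Re_sum (R : realType) n (F : 'I_n -> R[i]) :
  complex.Re (\sum_i F i) = \sum_i complex.Re (F i).
Proof. by elim/big_rec2: _ => // i a b _ <-; rewrite ReD. Qed.
Lemma Im_sum (R : realType) n (F : 'I_n -> R[i]) :
  complex.Im (\sum_i F i) = \sum_i complex.Im (F i).
Proof. by elim/big_rec2: _ => // i a b _ <-; rewrite ImD. Qed.

Lemma complex_ext (R : realType) (z : R[i]) : complex.Re z = 0 -> complex.Im z = 0 -> z = 0.
Proof. by case: z => a b /= -> ->. Qed.

Lemma inv2C (R : realType) : (2%:R : R[i])^-1 = (((2%:R : R)^-1)%:C)%C.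
Proof. by rewrite fmorphV rmorph_nat. Qed.

Lemma ReRM (R : realType) (r : R) (s : R[i]) : complex.Re ((r%:C)%C * s) = r * complex.Re s.
Proof. by case: s => a b /=; ring. Qed.
Lemma ImRM (R : realType) (r : R) (s : R[i]) : complex.Im ((r%:C)%C * s) = r * complex.Im s.
Proof. by case: s => a b /=; ring. Qed.

Lemma ReVyy (R : realType) (v : R[i]) (a b : R) :
  complex.Re (v * (a%:C)%C * (b%:C)%C) = complex.Re v * a * b.
Proof. by case: v => p q /=; ring. Qed.
Lemma ImVyy (R : realType) (v : R[i]) (a b : R) :
  complex.Im (v * (a%:C)%C * (b%:C)%C) = complex.Im v * a * b.
Proof. by case: v => p q /=; ring. Qed.

Definition Um (R : realType) n (V : 'M[R[i]]_n) : 'I_n -> 'I_n -> R :=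
  fun i j => complex.Re (V i j).
Definition Wm (R : realType) n (V : 'M[R[i]]_n) : 'I_n -> 'I_n -> R :=
  fun i j => complex.Im (V i j).
Definition dd (R : realType) n (A : 'M[R]_n) (Y : 'rV[R]_(n + n)) (i : 'I_n) : R :=
  (etacoord Y - ycoord Y *m A^T) 0 i.

Lemma ReQ (R : realType) n (A : 'M[R]_n) (V : 'M[R[i]]_n) Y :
  complex.Re (qAV A V Y) = \sum_i dd A Y i ^+ 2 + 2^-1 * QF (Um V) (ycoord Y).
Proof.
rewrite /qAV ReD inv2C ReRM Re_sum /=; congr (_ + _ * _).
by apply: eq_bigr => i _; rewrite Re_sum; apply: eq_bigr => j _; rewrite ReVyy.
Qed.

Lemma ImQ (R : realType) n (A : 'M[R]_n) (V : 'M[R[i]]_n) Y :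
  complex.Im (qAV A V Y) = 2^-1 * QF (Wm V) (ycoord Y).
Proof.
rewrite /qAV ImD inv2C ImRM Im_sum /= add0r; congr (_ * _).
by apply: eq_bigr => i _; rewrite Im_sum; apply: eq_bigr => j _; rewrite ImVyy.
Qed.

Definition ind_eta (R : realType) n (phi : 'rV[R]_(n + n) -> R) :=
  forall Y j h, phi (Y + h *: e_eta R j) = phi Y.

Lemma D_ind_eta (R : realType) n (phi : 'rV[R]_(n + n) -> R) Y j :
  ind_eta phi -> 'D_(e_eta R j) phi Y = 0.
Proof.
move=> H; apply: (@D_quad _ _ _ _ _ _ 0) => h.
by rewrite H !mulr0 !addr0.
Qed.

Lemma Dg_y (R : realType) n (A : 'M[R]_n) (V : 'M[R[i]]_n) Y j :
  V^T = V ->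
  'D_(e_y R j) (fun Z => complex.Im (qAV A V Z)) Y = Mv (Wm V) (ycoord Y) j.
Proof.
move=> sV.
have sW : symf (Wm V).
  by move=> a b; rewrite /Wm -[in LHS]sV mxE.
apply: (@D_quad _ _ _ _ _ _ (2^-1 * QF (Wm V) (delta_mx 0 j))) => h.
rewrite !ImQ ycoord_y QF_exp BL_sym // sum_delta.
by field.
Qed.

Lemma hamilton_g (R : realType) n (A : 'M[R]_n) (V : 'M[R[i]]_n) phi :
  V^T = V ->
  hamilton (fun Z => complex.Im (qAV A V Z)) phi =
  fun Y => - \sum_j Mv (Wm V) (ycoord Y) j * 'D_(e_eta R j) phi Y.
Proof.
move=> sV; apply: funext => Y; rewrite /hamilton -sumrN; apply: eq_bigr => j _.
rewrite Dg_y // D_ind_eta ?mul0r ?sub0r //.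
by move=> Z k h; rewrite !ImQ ycoord_eta.
Qed.

Definition f1 (R : realType) n (A : 'M[R]_n) (V : 'M[R[i]]_n) :=
  fun Y : 'rV[R]_(n + n) => - \sum_j Mv (Wm V) (ycoord Y) j * (2 * dd A Y j).
Definition f2 (R : realType) n (V : 'M[R[i]]_n) :=
  fun Y : 'rV[R]_(n + n) => \sum_j Mv (Wm V) (ycoord Y) j * (2 * Mv (Wm V) (ycoord Y) j).

Lemma dd_eta (R : realType) n (A : 'M[R]_n) (Y : 'rV[R]_(n + n)) j h i :
  dd A (Y + h *: e_eta R j) i = dd A Y i + h * (delta_mx 0 j : 'rV[R]_n) 0 i.
Proof.
rewrite /dd ycoord_eta etacoord_eta.
set yA := ycoord Y *m A^T.
rewrite !mxE; ring.
Qed.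

Lemma It1 (R : realType) n (A : 'M[R]_n) (V : 'M[R[i]]_n) : V^T = V ->
  hamilton (fun Z => complex.Im (qAV A V Z)) (fun Z => complex.Re (qAV A V Z)) = f1 A V.
Proof.
move=> sV; rewrite hamilton_g //; apply: funext => Y; rewrite /f1; congr (- _).
apply: eq_bigr => j _; congr (_ * _).
apply: (@D_quad _ _ _ _ _ _ 1) => h.
rewrite !ReQ ycoord_eta.
under eq_bigr do rewrite dd_eta.
rewrite sum_sq_shift; ring.
Qed.

Lemma It2 (R : realType) n (A : 'M[R]_n) (V : 'M[R[i]]_n) : V^T = V ->
  hamilton (fun Z => complex.Im (qAV A V Z)) (f1 A V) = f2 V.
Proof.
move=> sV; rewrite hamilton_g //; apply: funext => Y; rewrite /f2.
rewrite -sumrN; apply: eq_bigr => j _.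
rewrite (@D_quad _ _ _ _ _ (- (2 * Mv (Wm V) (ycoord Y) j)) 0); first by ring.
move=> h; rewrite /f1 ycoord_eta.
under eq_bigr do rewrite dd_eta.
have -> : \sum_i Mv (Wm V) (ycoord Y) i * (2 * (dd A Y i + h * (delta_mx 0 j : 'rV[R]_n) 0 i)) =
  \sum_i Mv (Wm V) (ycoord Y) i * (2 * dd A Y i) +
  2 * h * \sum_i (delta_mx 0 j : 'rV[R]_n) 0 i * Mv (Wm V) (ycoord Y) i.
  rewrite mulr_sumr -big_split /=; apply: eq_bigr => i _; ring.
rewrite sum_delta; ring.
Qed.

Lemma ind_ham (R : realType) n (A : 'M[R]_n) (V : 'M[R[i]]_n) phi : V^T = V ->
  ind_eta phi -> hamilton (fun Z => complex.Im (qAV A V Z)) phi = fun _ => 0.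
Proof.
move=> sV iphi; rewrite hamilton_g //; apply: funext => Y.
by rewrite big1 ?oppr0 // => j _; rewrite D_ind_eta // mulr0.
Qed.

Lemma iter_formula (R : realType) n (A : 'M[R]_n) (V : 'M[R[i]]_n) k Y : V^T = V ->
  iter k.+3 (hamilton (fun Z => complex.Im (qAV A V Z))) (fun Z => complex.Re (qAV A V Z)) Y = 0.
Proof.
move=> sV.
suff -> : iter k.+3 (hamilton (fun Z => complex.Im (qAV A V Z))) (fun Z => complex.Re (qAV A V Z)) = fun _ => 0 by [].
elim: k => [|k IH].
  rewrite /= It1 // It2 // ind_ham //.
  by move=> Z j h; rewrite /f2 ycoord_eta.
by rewrite iterS IH ind_ham.
Qed.

Lemma not_ell (R : realType) n (A : 'M[R]_n) (V : 'M[R[i]]_n) (y : 'rV[R]_n) :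
  V^T = V -> y != 0 -> (forall i, Mv (Um V) y i = 0) -> (forall i, Mv (Wm V) y i = 0) ->
  elliptic_on_singular_space (qAV A V) -> False.
Proof.
move=> sV yn MU MW ell.
pose Y : 'rV[R]_(n + n) := row_mx y (y *m A^T).
have yY : ycoord Y = y by rewrite /ycoord row_mxKl.
have dY : forall i, dd A Y i = 0.
  by move=> i; rewrite /dd yY /etacoord row_mxKr subrr mxE.
have QU : QF (Um V) y = 0 by rewrite QF_Mv big1 // => i _; rewrite MU mulr0.
have QW : QF (Wm V) y = 0 by rewrite QF_Mv big1 // => i _; rewrite MW mulr0.
have Y0 : Y = 0.
  apply: ell.
    case=> [|[|[|k]]].
    - rewrite [iter _ _ _]/= /= ReQ yY QU mulr0 addr0 big1 // => i _.
      by rewrite dY expr2 mulr0.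
    - rewrite [iter _ _ _]/= It1 // /f1 big1 ?oppr0 // => j _.
      by rewrite yY MW mul0r.
    - rewrite [iter _ _ _]/= It1 // It2 // /f2 big1 // => j _.
      by rewrite yY MW mul0r.
    - exact: iter_formula.
  apply: complex_ext.
    rewrite ReQ yY QU mulr0 addr0 big1 // => i _.
    by rewrite dY expr2 mulr0.
  by rewrite ImQ yY QW mulr0.
have : ycoord Y = ycoord (0 : 'rV[R]_(n + n)) by rewrite Y0.
rewrite yY => y0; move: yn; rewrite y0.
have -> : ycoord (0 : 'rV[R]_(n + n)) = 0 by apply/rowP => k; rewrite !mxE.
by rewrite eqxx.
Qed.

Lemma ReVr (R : realType) (v : R[i]) (a : R) :
  complex.Re (v * (a%:C)%C) = complex.Re v * a.
Proof. by case: v => p q /=; ring. Qed.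
Lemma ImVr (R : realType) (v : R[i]) (a : R) :
  complex.Im (v * (a%:C)%C) = complex.Im v * a.
Proof. by case: v => p q /=; ring. Qed.

Unset Implicit Arguments.
Theorem lemma2p2 (R : realType) (n : nat) (A : 'M[R]_n) (V : 'M[R[i]]_n) :
  V^T = V -> re_psd V ->
  (elliptic_on_singular_space (qAV A V) <-> V \in unitmx).
Proof.
move=> sV psdV.
have sVe : forall i j, V i j = V j i by move=> i j; rewrite -[in LHS]sV mxE.
have symU : symf (Um V) by move=> i j; rewrite /Um sVe.
have symW : symf (Wm V) by move=> i j; rewrite /Wm sVe.
have psdU : forall z, 0 <= QF (Um V) z by move=> z; exact: psdV.
split.
- move=> ell; case: (boolP (V \in unitmx)) => // nU; exfalso.
  have : \det V == 0 by move: nU; rewrite unitmxE unitfE negbK.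
  case/det0P => z z0 zV.
  pose a : 'rV[R]_n := \row_k complex.Re (z 0 k).
  pose b : 'rV[R]_n := \row_k complex.Im (z 0 k).
  have hc : forall c, Mv (Um V) a c - Mv (Wm V) b c = 0 /\
                      Mv (Wm V) a c + Mv (Um V) b c = 0.
    move=> c; have := congr1 (fun m : 'rV[R[i]]_n => m 0 c) zV; rewrite !mxE => E.
    split.
      have := congr1 (@complex.Re R) E; rewrite Re_sum => E'.
      rewrite -[RHS](_ : complex.Re (0 : R[i]) = 0) // -E' /Mv -sumrB.
      apply: eq_bigr => k _; rewrite !mxE /Um /Wm (sVe c k).
      by case: (z 0 k) => p q; case: (V k c) => u w /=; ring.
    have := congr1 (@complex.Im R) E; rewrite Im_sum => E'.
    rewrite -[RHS](_ : complex.Im (0 : R[i]) = 0) // -E' /Mv -big_split /=.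
    apply: eq_bigr => k _; rewrite !mxE /Um /Wm (sVe c k).
    by case: (z 0 k) => p q; case: (V k c) => u w /=; ring.
  have e1 : \sum_c a 0 c * Mv (Um V) a c = \sum_c a 0 c * Mv (Wm V) b c.
    by apply: eq_bigr => c _; have [h1 _] := hc c; congr (_ * _); lra.
  have e2 : \sum_c b 0 c * Mv (Um V) b c = - \sum_c b 0 c * Mv (Wm V) a c.
    rewrite -sumrN; apply: eq_bigr => c _; have [_ h2] := hc c.
    by rewrite -mulrN; congr (_ * _); lra.
  have Qab : QF (Um V) a + QF (Um V) b = 0.
    by rewrite !QF_Mv e1 e2 (bil_sym _ _ symW) subrr.
  have Qa : QF (Um V) a = 0 by have := psdU a; have := psdU b; lra.
  have Qb : QF (Um V) b = 0 by have := psdU a; have := psdU b; lra.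
  have MUa := psd_kernel symU psdU Qa.
  have MUb := psd_kernel symU psdU Qb.
  have MWb : forall c, Mv (Wm V) b c = 0.
    by move=> c; have [h1 _] := hc c; move: h1; rewrite MUa; lra.
  have MWa : forall c, Mv (Wm V) a c = 0.
    by move=> c; have [_ h2] := hc c; move: h2; rewrite MUb; lra.
  case: (eqVneq a 0) => [a0|anz]; last exact: (not_ell sV anz MUa MWa ell).
  case: (eqVneq b 0) => [b0|bnz]; last exact: (not_ell sV bnz MUb MWb ell).
  move/eqP: z0; apply; apply/rowP => k.
  have := congr1 (fun m : 'rV[R]_n => m 0 k) a0; have := congr1 (fun m : 'rV[R]_n => m 0 k) b0.
  rewrite !mxE; case: (z 0 k) => p q /= -> ->; by [].
- move=> uV Y SY qY0.
  have f0 := SY 0%N.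
  have f2 := SY 2%N.
  rewrite [iter _ _ _]/= /= ReQ in f0.
  rewrite [iter _ _ _]/= It1 // It2 // /f2 in f2.
  set y := ycoord Y in f0 f2 *.
  have Qpos : 0 <= QF (Um V) y := psdU y.
  have Spos : 0 <= \sum_i dd A Y i ^+ 2 by apply: sumr_ge0 => i _; exact: sqr_ge0.
  have Q0 : QF (Um V) y = 0 by lra.
  have S0 : \sum_i dd A Y i ^+ 2 = 0 by lra.
  have dd0 : forall i, dd A Y i = 0.
    move=> i; have nn : forall k, predT k -> 0 <= dd A Y k ^+ 2 by move=> k _; exact: sqr_ge0.
    by have := psumr_eq0P nn S0 (i := i) isT => /eqP; rewrite sqrf_eq0 => /eqP.
  have MW : forall i, Mv (Wm V) y i = 0.
    move=> i.
    have nn : forall k, predT k -> 0 <= Mv (Wm V) y k * (2 * Mv (Wm V) y k).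
      by move=> k _; rewrite mulrCA mulr_ge0 // -expr2 sqr_ge0.
    have := psumr_eq0P nn f2 (i := i) isT => /eqP; rewrite mulf_eq0 mulf_eq0.
    by rewrite pnatr_eq0 /= orbb => /eqP.
  have MU := psd_kernel symU psdU Q0.
  pose c : 'cV[R[i]]_n := \col_j ((y 0 j)%:C)%C.
  have Vc : V *m c = 0.
    apply/colP => i; rewrite !mxE; apply: complex_ext.
      rewrite Re_sum -[RHS](MU i); apply: eq_bigr => j _; by rewrite mxE ReVr.
    rewrite Im_sum -[RHS](MW i); apply: eq_bigr => j _; by rewrite mxE ImVr.
  have c0 : c = 0 by rewrite -(mulKmx uV c) Vc mulmx0.
  have y0 : y = 0.
    apply/rowP => j; have := congr1 (fun m : 'cV[R[i]]_n => m j 0) c0; rewrite !mxE.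
    by case.
  have eta0 : etacoord Y = 0.
    apply/rowP => i; have := dd0 i; rewrite /dd -/y y0 mul0mx subr0 => ->.
    by rewrite mxE.
  rewrite -(hsubmxK Y); rewrite -[lsubmx Y]/(ycoord Y) -[rsubmx Y]/(etacoord Y).
  by rewrite -/y y0 eta0 row_mx0.
Qed.
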